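(* Let $m\ge 3$. Call $\mathbf{x}=(x_1,\ldots,x_m)\in\mathbb{R}^m$ generic if the $\binom{m}{2}$ midpoints $(x_i+x_j)/2$, $1\le i<j\le m$, are pairwise distinct (in particular the $x_i$ are pairwise distinct). For such $\mathbf{x}$ define its ranking pattern $$\mathrm{RP}^{\mathrm{UF}}(\mathbf{x})=\{(i_1\cdots i_m)\in\mathbb{P}_m:\ |y-x_{i_1}|<\cdots<|y-x_{i_m}|\text{ for some }y\in\mathbb{R}\},$$ where $\mathbb{P}_m$ is the set of permutations $(i_1\cdots i_m)$ of $[m]=\{1,\ldots,m\}$. Two ranking patterns $\mathrm{RP}^{\mathrm{UF}}(\mathbf{x})$, $\mathrm{RP}^{\mathrm{UF}}(\mathbf{x}')$ are called equivalent if $\mathrm{RP}^{\mathrm{UF}}(\mathbf{x})=\{(\sigma(i_1)\cdots\sigma(i_m)):(i_1\cdots i_m)\in\mathrm{RP}^{\mathrm{UF}}(\mathbf{x}')\}$ for some bijection $\sigma:[m]\to[m]$. Let $r_{\mathrm{IE}}(m)$ be the number of equivalence classes of ranking patterns $\mathrm{RP}^{\mathrm{UF}}(\mathbf{x})$ with $\mathbf{x}\in\mathbb{R}^m$ generic, and let $r_0(m)$ be the number of distinct ranking patterns $\mathrm{RP}^{\mathrm{UF}}(\mathbf{x})$ with $\mathbf{x}$ generic and $x_1<\cdots<x_m$. Let $\mathcal{B}_m$ be the braid arrangement $\{\{x_i=x_j\}:1\le i<j\le m\}$ in $\mathbb{R}^m$ and $\mathcal{M}_m$ the mid-hyperplane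 arrangement consisting of the hyperplanes of $\mathcal{B}_m$ together with the hyperplanes $\{x_i+x_j=x_k+x_l\}$ for all $(i,j,k,l)$ with $i,j,k,l$ pairwise distinct, $1\le i<j\le m$, $i<k<l\le m$. Then $$r_{\mathrm{IE}}(m)=\begin{cases} r_0(3)=\dfrac{|\mathrm{ch}(\mathcal{B}_3)|}{3!}=1, & m=3,\\[2mm] \dfrac{r_0(m)}{2}=\dfrac{|\mathrm{ch}(\mathcal{M}_m)|}{2\cdot m!}, & m\ge 4,\end{cases}$$ where $\mathrm{ch}(\cdot)$ denotes the set of chambers (connected components of the complement of the union of the hyperplanes) of an arrangement. *)

(* Defs.v *)
From HB Require Import structures.
From mathcomp Require Import all_boot all_order all_algebra all_fingroup.
From mathcomp Require Import all_classical all_reals all_analysis.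
Set Implicit Arguments. Unset Strict Implicit. Unset Printing Implicit Defensive.
Import Order.TTheory GRing.Theory Num.Theory.
Import numFieldNormedType.Exports.
Local Open Scope ring_scope.

(* Indices [m] = {1..m} are represented by 'I_m = {0..m-1}.
   A point x in R^m is a row vector x : 'rV[R]_m, coordinate x_i = x ord0 i.
   A permutation (i_1 ... i_m) of [m] is s : 'S_m with s k = i_{k+1}. *)

Section Defs.
Variables (R : realType) (m : nat).

Definition generic (x : 'rV[R]_m) : Prop :=
  forall i j k l : 'I_m, (i < j)%N -> (k < l)%N -> (i, j) <> (k, l) ->
    (x ord0 i + x ord0 j) / 2 <> (x ord0 k + x ord0 l) / 2.

Definition RP (x : 'rV[R]_m) : {set 'S_m} :=
  [set s : 'S_m | `[< exists y : R, forall k k' : 'I_m, (k < k')%N ->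
       `|y - x ord0 (s k)| < `|y - x ord0 (s k')| >]].

(* relabelling by a bijection sigma : {(sigma(i_1)...sigma(i_m)) | (i_1...i_m) in P};
   note (s * sigma) k = sigma (s k) in MathComp *)
Definition relabel (sigma : 'S_m) (P : {set 'S_m}) : {set 'S_m} :=
  [set (s * sigma)%g | s in P].

Definition rp_equiv (P Q : {set 'S_m}) : bool :=
  [exists sigma : 'S_m, P == relabel sigma Q].

Definition RPs : {set {set 'S_m}} :=
  [set P : {set 'S_m} | `[< exists x : 'rV[R]_m, generic x /\ P = RP x >]].

Definition r_IE : nat :=
  #|[set [set Q in RPs | rp_equiv P Q] | P in RPs]|.

Definition r_0 : nat :=
  #|[set P : {set 'S_m} | `[< exists x : 'rV[R]_m, [/\ generic x,
        (forall i j : 'I_m, (i < j)%N -> x ord0 i < x ord0 j) & P = RP x] >]]|.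

End Defs.

Local Open Scope classical_set_scope.
Section Arr.
Variables (R : realType) (m : nat).

Definition hyp_eq (i j : 'I_m) : set 'rV[R]_m :=
  [set v | v ord0 i = v ord0 j].
Definition hyp_mid (i j k l : 'I_m) : set 'rV[R]_m :=
  [set v | v ord0 i + v ord0 j = v ord0 k + v ord0 l].

Definition braid_arr : set (set 'rV[R]_m) :=
  [set H | exists i j : 'I_m, (i < j)%N /\ H = hyp_eq i j].

Definition mid_arr : set (set 'rV[R]_m) :=
  braid_arr `|`
  [set H | exists i j k l : 'I_m,
      [/\ uniq [:: i; j; k; l], (i < j)%N, (i < k)%N, (k < l)%N
        & H = hyp_mid i j k l]].

Definition arr_complement (A : set (set 'rV[R]_m)) : set 'rV[R]_m :=
  ~` \bigcup_(H in A) H.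
Definition chambers (A : set (set 'rV[R]_m)) : set (set 'rV[R]_m) :=
  [set connected_component (arr_complement A) x | x in arr_complement A].

End Arr.

Arguments braid_arr : clear implicits.
Arguments mid_arr : clear implicits.
Arguments r_IE : clear implicits.
Arguments r_0 : clear implicits.
Arguments RPs : clear implicits.

(* Main.v *)
Require Import Defs.
From HB Require Import structures.
From mathcomp Require Import all_boot all_order all_algebra all_fingroup.
From mathcomp Require Import all_classical all_reals all_analysis.
From mathcomp Require Import ring lra zify.
Import Order.TTheory GRing.Theory Num.Theory.
Import numFieldNormedType.Exports.
Set Implicit Arguments. Unset Strict Implicit. Unset Printing Implicit Defensive.
Section RealAux.
Variable R : realType.
Local Open Scope ring_scope.

Lemma dist_lt (y p q : R) :
  (`|y - p| < `|y - q|) = ((q - p) * (2 * y - p - q) < 0).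
Proof.
case: (ger0P (y - p)) => h1; case: (ger0P (y - q)) => h2;
apply/idP/idP => H; nra.
Qed.

Lemma dist_eq (y p q : R) :
  (`|y - p| = `|y - q|) <-> ((q - p) * (2 * y - p - q) = 0).
Proof.
case: (ger0P (y - p)) => h1; case: (ger0P (y - q)) => h2; split => H; nra.
Qed.

Lemma sep_low (sb : seq R) (c : R) : (forall b, b \in sb -> c < b) ->
  exists z, c < z /\ forall b, b \in sb -> z < b.
Proof.
elim: sb => [|b sb IH] H; first by exists (c + 1); split => //; lra.
have [z [cz zb]] : exists z, c < z /\ forall b, b \in sb -> z < b.
  by apply: IH => b' hb; apply: H; rewrite inE hb orbT.
have cb : c < b by apply: H; rewrite inE eqxx.
exists (Num.min z ((c + b) / 2)); split.
  by rewrite lt_min cz /=; lra.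
move=> b'; rewrite inE => /orP[/eqP->|hb].
  by rewrite gt_min; apply/orP; right; lra.
by rewrite gt_min zb.
Qed.

Lemma sep_ex (sb : seq R) : exists c, forall b, b \in sb -> c < b.
Proof.
elim: sb => [|b sb [c Hc]]; first by exists 0.
exists (Num.min c (b - 1)) => b'; rewrite inE => /orP[/eqP->|hb].
  by rewrite gt_min; apply/orP; right; lra.
by rewrite gt_min Hc.
Qed.

Lemma sep_seq (sa sb : seq R) :
  (forall a b, a \in sa -> b \in sb -> a < b) ->
  exists z, (forall a, a \in sa -> a < z) /\ (forall b, b \in sb -> z < b).
Proof.
elim: sa => [|a sa IH] H.
  have [c Hc] := sep_ex sb; by exists c.
have [z [za zb]] : exists z, (forall a, a \in sa -> a < z) /\
    (forall b, b \in sb -> z < b).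
  by apply: IH => a' b ha hb; apply: H => //; rewrite inE ha orbT.
have Hc : forall b, b \in sb -> Num.max z a < b.
  by move=> b hb; rewrite gt_max zb //= H // inE eqxx.
have [z' [cz z'b]] := sep_low Hc.
exists z'; split => // a'; rewrite inE => /orP[/eqP->|ha].
  by move: cz; rewrite gt_max => /andP[].
by move: cz; rewrite gt_max => /andP[+ _]; apply: lt_trans; apply: za.
Qed.

Lemma sep_fin (I : finType) (A B : pred I) (f g : I -> R) :
  (forall i j, A i -> B j -> f i < g j) ->
  exists z, (forall i, A i -> f i < z) /\ (forall j, B j -> z < g j).
Proof.
move=> H.
have [|z [za zb]] := @sep_seq [seq f i | i <- enum A] [seq g j | j <- enum B].
  move=> a b /mapP[i + ->] /mapP[j + ->]; rewrite !mem_enum.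
  exact: H.
exists z; split.
  by move=> i Ai; apply: za; apply: map_f; rewrite mem_enum.
by move=> j Bj; apply: zb; apply: map_f; rewrite mem_enum.
Qed.

End RealAux.
Section PermAux.
Variable m : nat.
Local Open Scope ring_scope.

Definition revp : 'S_m := perm (@rev_ord_inj m).

Lemma revpE (i : 'I_m) : revp i = rev_ord i.
Proof. by rewrite permE. Qed.

Lemma revpK : (revp * revp = 1)%g.
Proof. by apply/permP => i; rewrite permM !revpE rev_ordK perm1. Qed.

Lemma revpV : (revp^-1 = revp)%g.
Proof. by rewrite -[LHS]mulg1 -revpK mulgA mulVg mul1g. Qed.

Lemma incr_perm_ge (t : 'S_m) :
  (forall k k' : 'I_m, (k < k')%N -> (t k < t k')%N) ->
  forall k : 'I_m, (k <= t k)%N.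
Proof.
move=> H.
suff: forall n (k : 'I_m), nat_of_ord k = n -> (n <= t k)%N.
  by move=> Hn k; apply: Hn.
elim=> [|n IH] k hk //.
have hn : (n < m)%N by rewrite -hk ltnW // ltn_ord.
have := IH (Ordinal hn) erefl.
have := H (Ordinal hn) k; rewrite hk /= ltnSn => /(_ isT).
move=> h1 h2; exact: leq_ltn_trans h2 h1.
Qed.

Lemma incr_perm_id (t : 'S_m) :
  (forall k k' : 'I_m, (k < k')%N -> (t k < t k')%N) -> t = 1%g.
Proof.
move=> H.
have Hi : forall k k' : 'I_m, (k < k')%N -> ((t^-1)%g k < (t^-1)%g k')%N.
  move=> k k' kk'; case: (ltngtP ((t^-1)%g k) ((t^-1)%g k')) => // h.
    have := H _ _ h; rewrite !permKV => h'.
    by have := ltn_trans h' kk'; rewrite ltnn.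
  have : k = k' by rewrite -(permKV t k) -(permKV t k'); congr (t _); apply: val_inj.
  by move=> e; move: kk'; rewrite e ltnn.
apply/permP => k; rewrite perm1; apply: val_inj => /=.
have h1 := incr_perm_ge Hi k.
have h2 := incr_perm_ge H ((t^-1)%g k); rewrite permKV in h2.
have e : ((t^-1)%g k) = k by apply: val_inj; apply/eqP; rewrite eqn_leq h1 h2.
by rewrite -{1}e permKV.
Qed.

Definition btw (a b c : nat) := (((a < b) && (b < c)) || ((c < b) && (b < a)))%N.

Lemma btw_perm (t : 'S_m) : (2 <= m)%N ->
  (forall a b c : 'I_m, btw a b c -> btw (t a) (t b) (t c)) ->
  t = 1%g \/ t = revp.
Proof.
move=> m2 H.
suff key : forall u : 'S_m, (forall a b c : 'I_m, btw a b c -> btw (u a) (u b) (u c)) ->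
    (u (Ordinal (ltn_trans (ltnSn 0) m2)) < u (Ordinal m2))%N -> u = 1%g.
  case: (ltngtP (t (Ordinal (ltn_trans (ltnSn 0) m2))) (t (Ordinal m2))) => h.
  - by left; apply: key.
  - right.
    have : (t * revp)%g = 1%g.
      apply: key.
        move=> a b c /H; rewrite !permM !revpE /btw /= => hh.
        have := ltn_ord (t a); have := ltn_ord (t b); have := ltn_ord (t c).
        move=> *; apply/orP; move/orP: hh => [/andP[? ?]|/andP[? ?]]; lia.
      rewrite !permM !revpE /=.
      have := ltn_ord (t (Ordinal (ltn_trans (ltnSn 0) m2))); move: h; lia.
    by move=> e; rewrite -[t]mulg1 -revpK mulgA e mul1g.
  - by move/val_inj: h; move/perm_inj.
move=> u Hu h01.
apply: incr_perm_id.
set d0 := Ordinal (ltn_trans (ltnSn 0) m2).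
have insK : forall n, (n < m)%N -> nat_of_ord (insubd d0 n : 'I_m) = n.
  by move=> n hn; rewrite val_insubd hn.
pose g := fun n : nat => nat_of_ord (u (insubd d0 n)).
have step : forall n, (n.+1 < m)%N -> (g n < g n.+1)%N.
  elim=> [|n IH] hn.
    rewrite /g; have -> : (insubd d0 0 : 'I_m) = d0.
      by apply: val_inj => /=; rewrite insK // (ltn_trans _ m2).
    have -> // : (insubd d0 1 : 'I_m) = Ordinal m2.
    by apply: val_inj => /=; rewrite insK.
  have := IH (ltn_trans (ltnSn _) hn).
  have := Hu (insubd d0 n) (insubd d0 n.+1) (insubd d0 n.+2).
  rewrite /btw !insK; last 3 first.
  - exact: hn.
  - exact: ltn_trans (ltnSn _) hn.
  - exact: ltn_trans (ltnSn _) (ltn_trans (ltnSn _) hn).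
  rewrite !ltnSn /= => /(_ isT); rewrite /g; lia.
have hom : {in [pred n | n < m]%N &, {homo g : i j / (i < j)%N >-> (i < j)%N}}.
  apply: homo_ltn_in.
  - by move=> y x z; apply: ltn_trans.
  - move=> i j; rewrite !inE => hi hj k /andP[_ hk].
    by rewrite inE; exact: ltn_trans hk hj.
  - by move=> i _; rewrite inE => hi; apply: step.
move=> k k' kk'.
have := hom k k' (ltn_ord k) (ltn_ord k') kk'.
have e : forall k0 : 'I_m, (insubd d0 k0 : 'I_m) = k0.
  by move=> k0; apply: val_inj => /=; rewrite insK.
by rewrite /g !e.
Qed.

End PermAux.
Section SortAux.
Variables (R : realType) (m : nat).
Local Open Scope ring_scope.

Lemma sort_perm (f : 'I_m -> R) : injective f ->
  exists s : 'S_m, forall k k' : 'I_m, (k < k')%N -> f (s k) < f (s k').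
Proof.
move=> finj.
pose rk i := #|[set j | f j < f i]|.
have rklt : forall i, (rk i < m)%N.
  move=> i; rewrite /rk.
  have sub : [set j | f j < f i] \subset [set~ i].
    by apply/fintype.subsetP => j; rewrite !inE; apply: contraTneq => ->; rewrite ltxx.
  have := subset_leq_card sub; rewrite cardsC1 card_ord.
  have := ltn_ord i; move=> hi h; apply: leq_ltn_trans h _.
  by rewrite prednK // (leq_ltn_trans _ hi).
have rkmono : forall i j, f i < f j -> (rk i < rk j)%N.
  move=> i j hij; apply: proper_card; apply/properP; split.
    by apply/fintype.subsetP => k; rewrite !inE => hk; apply: lt_trans hk hij.
  by exists i; rewrite !inE ?ltxx.
pose r i := Ordinal (rklt i).
have rinj : injective r.
  move=> i j /(congr1 val) /= e; case: (ltgtP (f i) (f j)) => h.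
  - by have := rkmono _ _ h; rewrite e ltnn.
  - by have := rkmono _ _ h; rewrite e ltnn.
  - exact: finj.
exists (perm rinj)^-1%g => k k' kk'.
set i := (perm rinj)^-1%g k; set j := (perm rinj)^-1%g k'.
have ei : r i = k by rewrite -[r i]permE permKV.
have ej : r j = k' by rewrite -[r j]permE permKV.
case: (ltgtP (f i) (f j)) => // h; last first.
  by have := finj _ _ h => e; move: kk'; rewrite -ei -ej e ltnn.
have := rkmono _ _ h; rewrite -[rk j]/(nat_of_ord (r j)) -[rk i]/(nat_of_ord (r i)).
by rewrite ei ej => h'; have := ltn_trans h' kk'; rewrite ltnn.
Qed.

Lemma pos_lt (s : 'S_m) (f : 'I_m -> R) :
  (forall k k' : 'I_m, (k < k')%N -> f (s k) < f (s k')) ->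
  forall i j, ((s^-1)%g i < (s^-1)%g j)%N = (f i < f j).
Proof.
move=> H i j.
rewrite -{2}(permKV s i) -{2}(permKV s j).
case: (ltngtP ((s^-1)%g i) ((s^-1)%g j)) => h.
- by rewrite H.
- by apply/esym/negbTE; rewrite -leNgt; apply/ltW/H.
- by have -> : (s^-1)%g i = (s^-1)%g j by apply: val_inj.
Qed.

End SortAux.
Section Core.
Variables (R : realType) (m : nat).
Local Open Scope ring_scope.
Implicit Types (x : 'rV[R]_m).

Definition Sx x (a b : 'I_m) := x ord0 a + x ord0 b.

Definition gen2 x := forall a b c d : 'I_m, a != b -> c != d ->
  Sx x a b = Sx x c d -> ((a == c) && (b == d)) || ((a == d) && (b == c)).

Definition sv x x' := forall a b c d : 'I_m, a != b -> c != d ->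
  (Sx x a b < Sx x c d) = (Sx x' a b < Sx x' c d).

Definition incr x := forall i j : 'I_m, (i < j)%N -> x ord0 i < x ord0 j.

Definition pmatch (a b c d : 'I_m) :=
  ((a == c) && (b == d)) || ((a == d) && (b == c)).

Lemma pmatchS x a b c d : pmatch a b c d -> Sx x a b = Sx x c d.
Proof.
by rewrite /pmatch /Sx => /orP[/andP[/eqP-> /eqP->]|/andP[/eqP-> /eqP->]] //;
  rewrite addrC.
Qed.

Lemma pmatch_trans (a b c d p q : 'I_m) :
  pmatch a b p q -> pmatch c d p q -> pmatch a b c d.
Proof.
rewrite /pmatch; case/orP => /andP[/eqP-> /eqP->]; case/orP => /andP[/eqP-> /eqP->];
by rewrite !eqxx ?orbT.
Qed.

Lemma sortpair (a b : 'I_m) : a != b ->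
  exists p q : 'I_m, (p < q)%N /\ pmatch a b p q.
Proof.
move=> ab; case: (ltngtP a b) => h.
- by exists a, b; rewrite /pmatch !eqxx.
- by exists b, a; rewrite /pmatch !eqxx orbT.
- by move: ab; rewrite (val_inj h) eqxx.
Qed.

Lemma generic_gen2 x : generic x <-> gen2 x.
Proof.
split=> [G a b c d ab cd e|G i j k l ij kl neq e].
  have [p [q [pq mab]]] := sortpair ab.
  have [r [t [rt mcd]]] := sortpair cd.
  have e' : Sx x p q = Sx x r t by rewrite -(pmatchS x mab) -(pmatchS x mcd).
  have [epr|] := eqVneq (p, q) (r, t).
    by move: mcd; move: epr => [<- <-]; apply: pmatch_trans.
  move=> /eqP neq'; exfalso; apply: (G p q r t pq rt neq').
  by rewrite /Sx in e'; rewrite e'.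
have e' : Sx x i j = Sx x k l.
  by rewrite /Sx; apply: (mulIf (x := 2^-1)) => //; rewrite invr_eq0 pnatr_eq0.
have ij' : i != j by rewrite neq_ltn ij.
have kl' : k != l by rewrite neq_ltn kl.
move: (G _ _ _ _ ij' kl' e') => /orP[/andP[/eqP ik /eqP jl]|/andP[/eqP il /eqP jk]].
  by apply: neq; rewrite ik jl.
by move: ij kl; rewrite il jk => h1 h2; have := ltn_trans h1 h2; rewrite ltnn.
Qed.

Lemma third (a b : 'I_m) : (3 <= m)%N -> exists c : 'I_m, (c != a) && (c != b).
Proof.
move=> m3.
have : (0 < #|~: [set a; b]|)%N.
  have := cardsC [set a; b]; rewrite card_ord cards2 => e.
  have : (#|[set a; b]| <= 2)%N by rewrite cards2; case: (a != b).
  move: e; rewrite cards2; lia.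
rewrite card_gt0 => /set0Pn[c]; rewrite !inE negb_or => h.
by exists c.
Qed.

Lemma gen2_neq x (a b : 'I_m) : (3 <= m)%N -> gen2 x -> a != b ->
  x ord0 a != x ord0 b.
Proof.
move=> m3 G ab; have [c /andP[ca cb]] := third a b m3.
apply/eqP => e.
have : Sx x c a = Sx x c b by rewrite /Sx e.
by move/(G _ _ _ _ (ca) (cb)); rewrite eqxx (negbTE ab) (negbTE cb).
Qed.

Lemma sv_order x x' (a b : 'I_m) : (3 <= m)%N -> sv x x' -> a != b ->
  (x ord0 a < x ord0 b) = (x' ord0 a < x' ord0 b).
Proof.
move=> m3 S ab; have [c /andP[ca cb]] := third a b m3.
have := S c a c b ca cb; rewrite /Sx !ltrD2l; done.
Qed.

Lemma svC x x' : sv x x' -> sv x' x.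
Proof. by move=> S a b c d ab cd; rewrite S. Qed.

Lemma RPE x (s : 'S_m) : (s \in RP x) = `[< exists y : R, forall k k' : 'I_m, (k < k')%N ->
       `|y - x ord0 (s k)| < `|y - x ord0 (s k')| >].
Proof. by rewrite inE. Qed.

Lemma rp_key x y (a b : 'I_m) :
  (`|y - x ord0 a| < `|y - x ord0 b|) = ((x ord0 b - x ord0 a) * (2 * y - Sx x a b) < 0).
Proof. by rewrite dist_lt /Sx opprD addrA. Qed.

Lemma sign_lo (u v : R) : v < 0 -> (v * u < 0) = (0 < u).
Proof. by move=> h; rewrite nmulr_rlt0. Qed.

Lemma sign_hi (u v : R) : 0 < v -> (v * u < 0) = (u < 0).
Proof. by move=> h; rewrite pmulr_rlt0. Qed.

End Core.
Section Topo.
Variables (R : realType) (m : nat).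
Local Open Scope ring_scope.
Local Open Scope classical_set_scope.
Implicit Types (x : 'rV[R]_m).

Definition Gs : set 'rV[R]_m := [set x | gen2 x].

Lemma gen2_pmatch x a b c d : gen2 x -> a != b -> c != d -> ~~ pmatch a b c d ->
  Sx x a b != Sx x c d.
Proof. by move=> G ab cd nm; apply/eqP => /(G _ _ _ _ ab cd); apply/negP. Qed.

Lemma segm_neg (U V t : R) : U < 0 -> V < 0 -> 0 <= t -> t <= 1 ->
  U + t * (V - U) < 0.
Proof.
move=> hU hV t0 t1.
have -> : U + t * (V - U) = (1 - t) * U + t * V by ring.
have h1 : (1 - t) * U <= 0 by apply: mulr_ge0_le0; lra.
case: (t =P 0) => [->|/eqP tn0]; first by rewrite subr0 mul1r mul0r addr0.
have h2 : t * V < 0 by rewrite pmulr_rlt0 // lt0r tn0.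
lra.
Qed.

Lemma sv_conn x x' : gen2 x -> gen2 x' -> sv x x' -> connected_component Gs x x'.
Proof.
move=> Gx Gx' S.
pose g := fun t : R => x + t *: (x' - x).
have gE : forall t i, g t ord0 i = x ord0 i + t * (x' ord0 i - x ord0 i).
  by move=> t i; rewrite /g !mxE.
have gc : continuous g.
  move=> t; rewrite /g; apply: cvgD; first exact: cvg_cst.
  by apply: cvgZr_tmp; exact: cvg_id.
have gsub : g @` `[0, 1] `<=` Gs.
  move=> _ [t /= t01 <-]; rewrite /Gs /= => a b c d ab cd e.
  case/boolP: (pmatch a b c d) => // nm.
  have u0 := gen2_pmatch Gx ab cd nm.
  have v0 := gen2_pmatch Gx' ab cd nm.
  have h1 := S a b c d ab cd; have h2 := S c d a b cd ab.
  move: e; rewrite /Sx !gE.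
  move: t01; rewrite in_itv /= => /andP[t0 t1].
  move: u0 v0 h1 h2; rewrite /Sx.
  set xa := x ord0 a; set xb := x ord0 b; set xc := x ord0 c; set xd := x ord0 d.
  set ya := x' ord0 a; set yb := x' ord0 b; set yc := x' ord0 c; set yd := x' ord0 d.
  move=> u0 v0 h1 h2 e; exfalso.
  case: (ltgtP (xa + xb) (xc + xd)) => h; last by move: u0; rewrite h eqxx.
  + have hy : ya + yb < yc + yd by rewrite -h1 h.
    have := @segm_neg (xa + xb - (xc + xd)) (ya + yb - (yc + yd)) t.
    rewrite !subr_lt0 => /(_ h hy t0 t1).
    have -> : xa + xb - (xc + xd) + t * (ya + yb - (yc + yd) - (xa + xb - (xc + xd)))
      = xa + t * (ya - xa) + (xb + t * (yb - xb)) - (xc + t * (yc - xc) + (xd + t * (yd - xd))) by ring.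
    by rewrite e subrr ltxx.
  + have hy : yc + yd < ya + yb by rewrite -h2 h.
    have := @segm_neg (xc + xd - (xa + xb)) (yc + yd - (ya + yb)) t.
    rewrite !subr_lt0 => /(_ h hy t0 t1).
    have -> : xc + xd - (xa + xb) + t * (yc + yd - (ya + yb) - (xc + xd - (xa + xb)))
      = xc + t * (yc - xc) + (xd + t * (yd - xd)) - (xa + t * (ya - xa) + (xb + t * (yb - xb))) by ring.
    by rewrite e subrr ltxx.
apply: (connected_component_max (B := g @` `[0, 1])).
- exists 0; last by rewrite /g scale0r addr0.
  by rewrite /= in_itv /= lexx ler01.
- exact: gsub.
- apply: connected_continuous_connected; first exact: segment_connected.
  exact: continuous_subspaceT.
- exists 1; last by rewrite /g scale1r addrC subrK.
  by rewrite /= in_itv /= lexx ler01.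
Qed.

Lemma conn_sv x x' : gen2 x -> connected_component Gs x x' -> sv x x'.
Proof.
move=> Gx Cx' a b c d ab cd.
case/boolP: (pmatch a b c d) => [pm|nm]; first by rewrite !(pmatchS _ pm) !ltxx.
pose phi := fun v : 'rV[R]_m => Sx v a b - Sx v c d.
have phic : continuous phi.
  move=> v; rewrite /phi /Sx.
  have ca : forall i, continuous (fun M : 'rV[R]_m => M ord0 i).
    by move=> i; apply: coord_continuous.
  exact: (continuousB (continuousD (ca a v) (ca b v)) (continuousD (ca c v) (ca d v))).
have Ci : is_interval (phi @` connected_component Gs x).
  apply/connected_intervalP/connected_continuous_connected.
    exact: component_connected.
  exact: continuous_subspaceT.
have Gx' : gen2 x' by have := connected_component_sub Cx'.
have Cx : connected_component Gs x x by apply: connected_component_refl.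
have nz : forall v, connected_component Gs x v -> phi v != 0.
  move=> v Cv; rewrite subr_eq0; apply: gen2_pmatch => //.
  exact: (connected_component_sub Cv).
have key : forall v w, connected_component Gs x v -> connected_component Gs x w ->
    phi v < 0 -> 0 < phi w -> False.
  move=> v w Cv Cw hv hw.
  have [u Cu e] : (phi @` connected_component Gs x) 0.
    apply: (Ci (phi v) (phi w)); [by exists v|by exists w|].
    by rewrite (ltW hv) (ltW hw).
  by have := nz u Cu; rewrite e eqxx.
have ex : forall v, (Sx v a b < Sx v c d) = (phi v < 0) by move=> v; rewrite /phi subr_lt0.
rewrite !ex.
have nzx := nz x Cx; have nzx' := nz x' Cx'.
case: (ltP (phi x) 0) => h1; case: (ltP (phi x') 0) => h2 //.
  exfalso; apply: (key x x') => //.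
  by rewrite lt_neqAle eq_sym nzx' h2.
exfalso; apply: (key x' x) => //.
by rewrite lt_neqAle eq_sym nzx h1.
Qed.

End Topo.
Section Comb.
Variables (R : realType) (m : nat).
Local Open Scope ring_scope.
Implicit Types (x : 'rV[R]_m).

Lemma RPin x (s : 'S_m) : s \in RP x <-> exists y : R, forall k k' : 'I_m, (k < k')%N ->
       `|y - x ord0 (s k)| < `|y - x ord0 (s k')|.
Proof. by rewrite inE; split => /asboolP. Qed.

Lemma sv_RP x x' (s : 'S_m) : (3 <= m)%N -> gen2 x -> gen2 x' -> sv x x' ->
  s \in RP x -> s \in RP x'.
Proof.
move=> m3 Gx Gx' S /RPin [y Hy]; apply/RPin.
have Hp := @pos_lt R m s (fun i => `|y - x ord0 i|) Hy.
pose A := fun e : 'I_m * 'I_m => (((s^-1)%g e.1 < (s^-1)%g e.2)%N && (x ord0 e.2 < x ord0 e.1)).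
pose B := fun e : 'I_m * 'I_m => (((s^-1)%g e.1 < (s^-1)%g e.2)%N && (x ord0 e.1 < x ord0 e.2)).
have lo : forall e, A e -> Sx x e.1 e.2 < 2 * y.
  move=> e /andP[h1 h2]; move: h1; rewrite Hp rp_key sign_lo ?subr_lt0 //.
  by rewrite subr_gt0.
have hi : forall e, B e -> 2 * y < Sx x e.1 e.2.
  move=> e /andP[h1 h2]; move: h1; rewrite Hp rp_key sign_hi ?subr_gt0 //.
  by rewrite subr_lt0.
have nA : forall e, A e -> e.1 != e.2.
  by move=> e /andP[_ h]; apply: contraTneq h => ->; rewrite ltxx.
have nB : forall e, B e -> e.1 != e.2.
  by move=> e /andP[_ h]; apply: contraTneq h => ->; rewrite ltxx.
have AB : forall i j, A i -> B j -> Sx x' i.1 i.2 < Sx x' j.1 j.2.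
  move=> i j Ai Bj /=; rewrite -S; [exact: lt_trans (lo i Ai) (hi j Bj)|exact: nA|exact: nB].
have [z [zA zB]] := @sep_fin R _ A B (fun e => Sx x' e.1 e.2) (fun e => Sx x' e.1 e.2) AB.
exists (z / 2) => k k' kk'.
have z2 : 2 * (z / 2) = z by lra.
have pk : (s^-1)%g (s k) = k by rewrite permK.
have pk' : (s^-1)%g (s k') = k' by rewrite permK.
have ab : s k != s k'.
  by rewrite (inj_eq perm_inj); apply: contraTneq kk' => ->; rewrite ltnn.
rewrite rp_key z2.
case: (ltgtP (x ord0 (s k)) (x ord0 (s k'))) => hab.
- have Bab : B (s k, s k') by apply/andP; split => //=; rewrite pk pk'.
  have := zB _ Bab => /= h.
  rewrite sign_hi ?subr_lt0 // subr_gt0 -(sv_order m3 S ab) //.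
- have Aab : A (s k, s k') by apply/andP; split => //=; rewrite pk pk'.
  have := zA _ Aab => /= h.
  rewrite sign_lo ?subr_gt0 // subr_lt0 -(sv_order m3 S) //; by rewrite eq_sym.
- by move: (gen2_neq m3 Gx ab); rewrite hab eqxx.
Qed.

Lemma charac x (p q r t : 'I_m) : (3 <= m)%N -> incr x -> gen2 x ->
  (p < q)%N -> (r < t)%N ->
  (Sx x p q < Sx x r t) <->
  exists2 s : 'S_m, s \in RP x &
    (((s^-1)%g q < (s^-1)%g p)%N && ((s^-1)%g r < (s^-1)%g t)%N).
Proof.
move=> m3 I Gx pq rt; split => [h|[s /RPin [y Hy] /andP[h1 h2]]]; last first.
  have Hp := @pos_lt R m s (fun i => `|y - x ord0 i|) Hy.
  have v1 : x ord0 p - x ord0 q < 0 by rewrite subr_lt0 I.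
  have v2 : 0 < x ord0 t - x ord0 r by rewrite subr_gt0 I.
  move: h1 h2; rewrite !Hp !rp_key (sign_lo _ v1) (sign_hi _ v2) subr_gt0 subr_lt0 => h1 h2.
  by rewrite /Sx addrC; exact: lt_trans h1 h2.
pose A := fun e : 'I_m * 'I_m => (e.1 != e.2) && (Sx x e.1 e.2 <= Sx x p q).
pose B := fun e : 'I_m * 'I_m => (e.1 != e.2) && (Sx x p q < Sx x e.1 e.2).
have AB : forall i j, A i -> B j -> Sx x i.1 i.2 < Sx x j.1 j.2.
  by move=> i j /andP[_ hi] /andP[_ hj]; exact: le_lt_trans hi hj.
have [z [zA zB]] := @sep_fin R _ A B (fun e => Sx x e.1 e.2) (fun e => Sx x e.1 e.2) AB.
have zne : forall a b : 'I_m, a != b -> z != Sx x a b.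
  move=> a b ab; case: (leP (Sx x a b) (Sx x p q)) => h'.
    by have := zA (a, b); rewrite /A /= ab h' => /(_ isT) hz; rewrite gt_eqF.
  by have := zB (a, b); rewrite /B /= ab h' => /(_ isT) hz; rewrite lt_eqF.
pose y := z / 2.
have z2 : 2 * y = z by rewrite /y; lra.
have finj : injective (fun i => `|y - x ord0 i|).
  move=> i j /= e; case: (eqVneq i j) => // nij; exfalso.
  move/dist_eq: e => /eqP; rewrite mulf_eq0 => /orP[/eqP e|/eqP e].
    by move: (gen2_neq m3 Gx nij); rewrite -subr_eq0 -oppr_eq0 opprB e eqxx.
  have : z = Sx x i j by rewrite -z2 /Sx; lra.
  by move/eqP; rewrite (negbTE (zne _ _ nij)).
have [s Hs] := sort_perm finj.
exists s; first by apply/RPin; exists y.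
have Hp := @pos_lt R m s (fun i => `|y - x ord0 i|) Hs.
rewrite !Hp !rp_key z2.
have pq' : p != q by rewrite neq_ltn pq.
have rt' : r != t by rewrite neq_ltn rt.
have zpq : Sx x p q < z by apply: (zA (p, q)); rewrite /A /= pq' lexx.
have zrt : z < Sx x r t by apply: (zB (r, t)); rewrite /B /= rt' h.
have v1 : x ord0 p - x ord0 q < 0 by rewrite subr_lt0 I.
have v2 : 0 < x ord0 t - x ord0 r by rewrite subr_gt0 I.
rewrite (sign_lo _ v1) (sign_hi _ v2) subr_gt0 subr_lt0 zrt andbT.
by rewrite /Sx addrC.
Qed.

Lemma RP_sv x x' : (3 <= m)%N -> incr x -> gen2 x -> incr x' -> gen2 x' ->
  RP x = RP x' -> sv x x'.
Proof.
move=> m3 I Gx I' Gx' E a b c d ab cd.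
have [p [q [pq mab]]] := sortpair ab.
have [r [t [rt mcd]]] := sortpair cd.
rewrite !(pmatchS _ mab) !(pmatchS _ mcd).
apply/idP/idP => h.
  by apply/(charac m3 I' Gx' pq rt); rewrite -E; apply/(charac m3 I Gx pq rt).
by apply/(charac m3 I Gx pq rt); rewrite E; apply/(charac m3 I' Gx' pq rt).
Qed.

Definition BtwP (P : {set 'S_m}) (a b c : 'I_m) := forall s : 'S_m, s \in P ->
  ~~ ((((s^-1)%g a < (s^-1)%g b)%N && ((s^-1)%g c < (s^-1)%g b)%N)).

Lemma btw_RP1 x (a b c : 'I_m) : incr x -> btw a b c -> BtwP (RP x) a b c.
Proof.
move=> I hb s /RPin [y Hy].
have Hp := @pos_lt R m s (fun i => `|y - x ord0 i|) Hy.
rewrite !Hp !rp_key; apply/negP => /andP[h1 h2].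
move: hb; rewrite /btw => /orP[/andP[ab bc]|/andP[cb ba]].
  have xab := I _ _ ab; have xbc := I _ _ bc.
  have v1 : 0 < x ord0 b - x ord0 a by rewrite subr_gt0.
  have v2 : x ord0 b - x ord0 c < 0 by rewrite subr_lt0.
  move: h1 h2; rewrite (sign_hi _ v1) (sign_lo _ v2) /Sx; lra.
have xcb := I _ _ cb; have xba := I _ _ ba.
have v1 : x ord0 b - x ord0 a < 0 by rewrite subr_lt0.
have v2 : 0 < x ord0 b - x ord0 c by rewrite subr_gt0.
move: h1 h2; rewrite (sign_lo _ v1) (sign_hi _ v2) /Sx; lra.
Qed.

Lemma incr_le x (i j : 'I_m) : incr x -> (i <= j)%N -> x ord0 i <= x ord0 j.
Proof.
move=> I; rewrite leq_eqVlt => /orP[/eqP e|h]; last exact/ltW/I.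
by have -> : i = j by apply: val_inj.
Qed.

Lemma btw_RP2 x (a b c : 'I_m) : incr x -> a != b -> b != c ->
  BtwP (RP x) a b c -> btw a b c.
Proof.
move=> I ab bc H; apply: contraT => nb.
have m0 : (0 < m)%N by apply: leq_ltn_trans (ltn_ord a).
have [[hab hcb]|[hba hbc]] : ((a < b) /\ (c < b))%N \/ ((b < a) /\ (b < c))%N.
    move: nb ab bc; rewrite /btw -!val_eqE /=; lia.
  set d0 : 'I_m := Ordinal m0.
  have one : ((1 : 'S_m)%g) \in RP x.
    apply/RPin; exists (x ord0 d0 - 1) => k k' kk'.
    have h1 := @incr_le x d0 k I (leq0n k); have h2 := @incr_le x d0 k' I (leq0n k').
    have h3 := I _ _ kk'.
    by rewrite !perm1 !ltr0_norm; lra.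
  by have := H _ one; rewrite invg1 !perm1 hab hcb.
have mm : (m.-1 < m)%N by rewrite prednK.
set dm : 'I_m := Ordinal mm.
have kle : forall k : 'I_m, x ord0 k <= x ord0 dm.
  by move=> k; apply: incr_le => //=; rewrite -ltnS prednK.
have rv : revp m \in RP x.
  apply/RPin; exists (x ord0 dm + 1) => k k' kk'.
  have h1 := kle (rev_ord k); have h2 := kle (rev_ord k').
  have h3 : x ord0 (rev_ord k') < x ord0 (rev_ord k).
    by apply: I => /=; have := ltn_ord k'; lia.
  by rewrite !revpE !gtr0_norm; lra.
have := H _ rv; rewrite revpV !revpE /=.
have := ltn_ord a; have := ltn_ord b; have := ltn_ord c.
lia.
Qed.

End Comb.
Section Relab.
Variables (R : realType) (m : nat).
Local Open Scope ring_scope.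
Implicit Types (x : 'rV[R]_m).

Definition rowp x (p : 'S_m) : 'rV[R]_m := \row_j x ord0 (p j).
Definition rowr x : 'rV[R]_m := \row_j - x ord0 (rev_ord j).

Lemma rowpE x p j : rowp x p ord0 j = x ord0 (p j).
Proof. by rewrite mxE. Qed.

Lemma rowrE x j : rowr x ord0 j = - x ord0 (rev_ord j).
Proof. by rewrite mxE. Qed.

Lemma relabel1 (P : {set 'S_m}) : relabel 1%g P = P.
Proof. by rewrite /relabel (eq_imset _ (fun s => mulg1 s)) imset_id. Qed.

Lemma relabelM (a b : 'S_m) (P : {set 'S_m}) :
  relabel a (relabel b P) = relabel (b * a)%g P.
Proof.
rewrite /relabel -imset_comp; apply: eq_imset => s /=; by rewrite mulgA.
Qed.

Lemma rp_equivP (P Q : {set 'S_m}) :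
  reflect (exists a : 'S_m, P = relabel a Q) (rp_equiv P Q).
Proof.
apply: (iffP existsP) => [[a /eqP e]|[a e]]; by exists a; rewrite ?e.
Qed.

Lemma rp_equiv_refl (P : {set 'S_m}) : rp_equiv P P.
Proof. by apply/rp_equivP; exists 1%g; rewrite relabel1. Qed.

Lemma rp_equiv_sym (P Q : {set 'S_m}) : rp_equiv P Q -> rp_equiv Q P.
Proof.
move/rp_equivP => [a ->]; apply/rp_equivP; exists a^-1%g.
by rewrite relabelM mulgV relabel1.
Qed.

Lemma rp_equiv_trans (P Q S : {set 'S_m}) : rp_equiv P Q -> rp_equiv Q S -> rp_equiv P S.
Proof.
move=> /rp_equivP [a ->] /rp_equivP [b ->]; apply/rp_equivP; exists (b * a)%g.
by rewrite relabelM.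
Qed.

Lemma RP_rowp x p : RP x = relabel p (RP (rowp x p)).
Proof.
apply/setP => s; apply/idP/imsetP.
  move/RPin => [y Hy]; exists (s * p^-1)%g; last by rewrite -mulgA mulVg mulg1.
  apply/RPin; exists y => k k' kk'; rewrite !rowpE -!permM -mulgA mulVg mulg1.
  by move: (Hy k k' kk').
move=> [t /RPin [y Hy] ->]; apply/RPin; exists y => k k' kk'.
by rewrite !permM; have := Hy k k' kk'; rewrite !rowpE.
Qed.

Lemma gen2_rowp x p : gen2 x -> gen2 (rowp x p).
Proof.
move=> G a b c d ab cd; rewrite /Sx !rowpE => e.
have := G (p a) (p b) (p c) (p d).
by rewrite !(inj_eq perm_inj); move=> /(_ ab cd e).
Qed.

Lemma sv_rowp x x' p : sv x x' -> sv (rowp x p) (rowp x' p).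
Proof.
move=> S a b c d ab cd; rewrite /Sx !rowpE.
by have := S (p a) (p b) (p c) (p d); rewrite !(inj_eq perm_inj) => /(_ ab cd).
Qed.

Lemma rowpK x p : rowp (rowp x p) p^-1%g = x.
Proof.
by apply/rowP => j; rewrite !rowpE permKV.
Qed.

Lemma incr_rowr x : incr x -> incr (rowr x).
Proof.
move=> I i j ij; rewrite !rowrE ltrN2; apply: I => /=.
have := ltn_ord j; lia.
Qed.

Lemma gen2_rowr x : gen2 x -> gen2 (rowr x).
Proof.
move=> G a b c d ab cd; rewrite /Sx !rowrE -!opprD => /oppr_inj e.
have := G (rev_ord a) (rev_ord b) (rev_ord c) (rev_ord d).
by rewrite !(inj_eq rev_ord_inj); move=> /(_ ab cd e).
Qed.

Lemma normNN (a b : R) : `|a - - b| = `|- a - b|.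
Proof. by rewrite opprK -normrN opprD. Qed.

Lemma RP_rowr x : RP (rowr x) = relabel (revp m) (RP x).
Proof.
apply/setP => s; apply/idP/imsetP.
  move/RPin => [y Hy]; exists (s * revp m)%g; last by rewrite -mulgA revpK mulg1.
  apply/RPin; exists (- y) => k k' kk'; rewrite !permM !revpE.
  by have := Hy k k' kk'; rewrite !rowrE !normNN.
move=> [t /RPin [y Hy] ->]; apply/RPin; exists (- y) => k k' kk'.
rewrite !rowrE !permM !revpE !rev_ordK !normNN !opprK.
exact: Hy.
Qed.

End Relab.
Section Cham.
Variables (R : realType) (m : nat).
Local Open Scope ring_scope.
Implicit Types (x : 'rV[R]_m).

Definition Iset : {set {set 'S_m}} :=
  [set P : {set 'S_m} | `[< exists x : 'rV[R]_m, [/\ generic x,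
        (forall i j : 'I_m, (i < j)%N -> x ord0 i < x ord0 j) & P = RP x] >]].

Lemma r0E : r_0 R m = #|Iset|.
Proof. by []. Qed.

Lemma IsetP (P : {set 'S_m}) :
  P \in Iset <-> exists x, [/\ gen2 x, incr x & P = RP x].
Proof.
rewrite inE; split => [/asboolP [x [G I E]]|[x [G I E]]].
  by exists x; split => //; apply/generic_gen2.
by apply/asboolP; exists x; split => //; apply/generic_gen2.
Qed.

Arguments IsetP {P}.

Lemma Iset_RP x : gen2 x -> incr x -> RP x \in Iset.
Proof. by move=> G I; apply/IsetP; exists x. Qed.

Lemma incr_lt x (i j : 'I_m) : incr x -> (x ord0 i < x ord0 j) = (i < j)%N.
Proof.
move=> I; apply/idP/idP => [h|]; last exact: I.
case: (ltngtP i j) => // h'.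
  by have := I _ _ h'; rewrite ltNge (ltW h).
by move: h; rewrite (val_inj h') ltxx.
Qed.

Lemma sort_gen x : (3 <= m)%N -> gen2 x ->
  exists p : 'S_m, gen2 (rowp x p) /\ incr (rowp x p).
Proof.
move=> m3 G.
have finj : injective (fun i => x ord0 i).
  move=> i j /= e; case: (eqVneq i j) => // nij.
  by move: (gen2_neq m3 G nij); rewrite e eqxx.
have [p Hp] := sort_perm finj.
exists p; split; first exact: gen2_rowp.
by move=> i j ij; rewrite !rowpE; apply: Hp.
Qed.

Lemma RP_eq_of_sv x x' : (3 <= m)%N -> gen2 x -> gen2 x' -> sv x x' -> RP x = RP x'.
Proof.
move=> m3 G G' S; apply/setP => s; apply/idP/idP; first exact: sv_RP.
by apply: sv_RP => //; apply: svC.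
Qed.

Local Open Scope classical_set_scope.

Lemma chambers_count (A : set (set 'rV[R]_m)) : (3 <= m)%N ->
  arr_complement A = @Gs R m ->
  (chambers A #= `I_(r_0 R m * m`!))%card.
Proof.
move=> m3 HA; rewrite /chambers HA r0E.
have ex : forall k : 'I_#|Iset|, exists x, [/\ gen2 x, incr x & enum_val k = RP x].
  by move=> k; apply/IsetP; apply: enum_valP.
pose pt := fun k : 'I_#|Iset| => proj1_sig (cid (ex k)).
have ptP : forall k, [/\ gen2 (pt k), incr (pt k) & enum_val k = RP (pt k)].
  by move=> k; rewrite /pt; case: (cid (ex k)).
pose T := ('S_m * 'I_#|Iset|)%type.
pose w := fun u : T => rowp (pt u.2) (u.1^-1)%g.
have wG : forall u, gen2 (w u).
  by move=> u; apply: gen2_rowp; case: (ptP u.2).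
have wK : forall u, rowp (w u) u.1 = pt u.2.
  by move=> u; rewrite /w -{2}(invgK u.1) rowpK.
pose f := fun u : T => connected_component (@Gs R m) (w u).
have finj : injective f.
  move=> [p k] [p' k'] e.
  have Cu : connected_component (@Gs R m) (w (p', k')) (w (p, k)).
    by rewrite -/(f (p', k')) -e; apply: connected_component_refl; apply: wG.
  have S := conn_sv (wG _) Cu.
  set v := w (p, k) in S Cu; set v' := w (p', k') in S Cu.
  have vP : forall j j' : 'I_m, (j < j')%N -> v ord0 (p j) < v ord0 (p j').
    move=> j j' jj'; rewrite -!(rowpE v p) /v wK /=.
    by case: (ptP k) => _ I _; apply: I.
  have vP' : forall j j' : 'I_m, (j < j')%N -> v' ord0 (p' j) < v' ord0 (p' j').
    move=> j j' jj'; rewrite -!(rowpE v' p') /v' wK /=.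
    by case: (ptP k') => _ I _; apply: I.
  have wK' : rowp v p = pt k by rewrite /v wK.
  have wK'' : rowp v' p' = pt k' by rewrite /v' wK.
  clearbody v v'.
  have ep : p = p'.
    have tau1 : (p * p'^-1)%g = 1%g.
      apply: incr_perm_id => j j' jj'.
      have I' : incr (rowp v' p') by rewrite /incr => i i' ii'; rewrite !rowpE; apply: vP'.
      rewrite -(incr_lt _ _ I') !rowpE !permM !permKV.
      rewrite (sv_order m3 S); first exact: vP.
      by rewrite (inj_eq perm_inj); apply: contraTneq jj' => ->; rewrite ltnn.
    by rewrite -[p]mulg1 -(mulVg p') mulgA tau1 mul1g.
  subst p'.
  have S' : sv (pt k') (pt k) by rewrite -wK' -wK''; apply: sv_rowp.
  have ek : enum_val k = enum_val k'.
    case: (ptP k) => Gk _ ->; case: (ptP k') => Gk' _ ->.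
    by apply/esym/RP_eq_of_sv.
  by rewrite (enum_val_inj ek).
pose F := fun i : 'I_#|{: T}| => f (enum_val i).
have Finj : injective F by move=> i j /finj /enum_val_inj.
have img : [set connected_component (@Gs R m) x | x in @Gs R m] = F @` [set: 'I_#|{: T}|].
  apply/seteqP; split => C.
    move=> [z Gz <-].
    have [p [Gp Ip]] := sort_gen m3 Gz.
    have Iz : RP (rowp z p) \in Iset := Iset_RP Gp Ip.
    set k := enum_rank_in Iz (RP (rowp z p)).
    have ek : enum_val k = RP (rowp z p) by rewrite /k enum_rankK_in.
    exists (enum_rank (p, k)) => //.
    rewrite /F enum_rankK /f.
    apply: same_connected_component; apply: connected_component_sym.
    apply: sv_conn => //.
    have S : sv (rowp z p) (pt k).
      case: (ptP k) => Gk Ik Ek; apply: RP_sv => //.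
      by rewrite -Ek.
    by have := sv_rowp (p^-1)%g S; rewrite rowpK.
  move=> [i _ <-]; exists (w (enum_val i)); first exact: wG.
  by [].
rewrite img.
apply: (@card_eq_trans _ _ _ _ [set: 'I_#|{: T}|]).
  by apply: inj_card_eq => i j _ _; apply: Finj.
rewrite card_prod card_Sn card_ord mulnC.
exact/card_esym/card_II.
Qed.

End Cham.
Arguments IsetP {R m P}.
Section Compl.
Variables (R : realType) (m : nat).
Local Open Scope ring_scope.
Implicit Types (x : 'rV[R]_m).

Lemma pm_mem (a b p q : 'I_m) : pmatch a b p q ->
  ((p == a) || (p == b)) && ((q == a) || (q == b)).
Proof.
by rewrite /pmatch => /orP[/andP[/eqP-> /eqP->]|/andP[/eqP-> /eqP->]];
  rewrite !eqxx ?orbT.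
Qed.

Lemma gen2_of x :
  (forall u v : 'I_m, (u < v)%N -> x ord0 u != x ord0 v) ->
  (forall i j k l : 'I_m, uniq [:: i; j; k; l] -> (i < j)%N -> (i < k)%N -> (k < l)%N ->
     Sx x i j != Sx x k l) -> gen2 x.
Proof.
move=> H1 H2 a b c d ab cd e.
case/boolP: (pmatch a b c d) => // nm; exfalso.
have xneq : forall u v : 'I_m, u != v -> x ord0 u != x ord0 v.
  move=> u v uv; case: (ltngtP u v) => h; first exact: H1.
    by rewrite eq_sym; apply: H1.
  by move: uv; rewrite (val_inj h) eqxx.
have cancel1 : forall u v w0, Sx x u v = Sx x u w0 -> x ord0 v = x ord0 w0.
  by move=> u v w0; rewrite /Sx => /addrI.
case: (eqVneq a c) => [ac|ac].
  subst c; have bd : b != d by apply: contraNneq nm => ->; rewrite /pmatch !eqxx.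
  by move: (xneq _ _ bd); rewrite (cancel1 _ _ _ e) eqxx.
case: (eqVneq a d) => [ad|ad].
  subst d; have bc : b != c by apply: contraNneq nm => ->; rewrite /pmatch !eqxx orbT.
  have e2 : Sx x a b = Sx x a c by move: e; rewrite /Sx [x ord0 c + _]addrC.
  by move: (xneq _ _ bc); rewrite (cancel1 _ _ _ e2) eqxx.
case: (eqVneq b c) => [bc|bc].
  subst c; have ad' : a != d by [].
  have e2 : Sx x b a = Sx x b d by move: e; rewrite /Sx [x ord0 a + _]addrC.
  by move: (xneq _ _ ad'); rewrite (cancel1 _ _ _ e2) eqxx.
case: (eqVneq b d) => [bd|bd].
  subst d; have ac' : a != c by [].
  have e2 : Sx x b a = Sx x b c by move: e; rewrite /Sx [x ord0 a + _]addrC [x ord0 c + _]addrC.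
  by move: (xneq _ _ ac'); rewrite (cancel1 _ _ _ e2) eqxx.
have [p [q [pq mab]]] := sortpair ab.
have [r [t [rt mcd]]] := sortpair cd.
have e' : Sx x p q = Sx x r t by rewrite -(pmatchS x mab) -(pmatchS x mcd).
have /andP[hp hq] := pm_mem mab.
have /andP[hr ht] := pm_mem mcd.
have cross : forall u v, (u == a) || (u == b) -> (v == c) || (v == d) -> u != v.
  move=> u v /orP[/eqP->|/eqP->] /orP[/eqP->|/eqP->] //.
have pq' : p != q by rewrite neq_ltn pq.
have rt' : r != t by rewrite neq_ltn rt.
have upqrt : uniq [:: p; q; r; t].
  rewrite /= !inE !negb_or pq' rt' (cross _ _ hp hr) (cross _ _ hp ht).
  by rewrite (cross _ _ hq hr) (cross _ _ hq ht).
have urtpq : uniq [:: r; t; p; q].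
  rewrite /= !inE !negb_or pq' rt' !(eq_sym r) !(eq_sym t).
  by rewrite (cross _ _ hp hr) (cross _ _ hp ht) (cross _ _ hq hr) (cross _ _ hq ht).
case: (ltngtP p r) => h.
- by move: (H2 _ _ _ _ upqrt pq h rt); rewrite e' eqxx.
- by move: (H2 _ _ _ _ urtpq rt h pq); rewrite e' eqxx.
- by move: (cross _ _ hp hr); rewrite (val_inj h) eqxx.
Qed.

End Compl.
Section Compl2.
Variables (R : realType).
Local Open Scope ring_scope.
Local Open Scope classical_set_scope.

Lemma comp_mid m : (3 <= m)%N -> arr_complement (mid_arr R m) = @Gs R m.
Proof.
move=> m3; apply/seteqP; split => x.
  move=> hx; apply: gen2_of.
    move=> u v uv; apply/eqP => e; apply: hx.
    exists (hyp_eq u v); last exact: e.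
    by left; exists u, v.
  move=> i j k l u ij ik kl; apply/eqP => e; apply: hx.
  exists (hyp_mid i j k l); last exact: e.
  by right; exists i, j, k, l; split.
move=> Gx [H mH Hx]; case: mH.
  move=> [i [j [ij E]]]; subst H.
  by have := gen2_neq m3 Gx (a := i) (b := j); rewrite neq_ltn ij Hx eqxx => /(_ isT).
move=> [i [j [k [l [u ij ik kl E]]]]]; subst H.
have ij' : i != j by rewrite neq_ltn ij.
have kl' : k != l by rewrite neq_ltn kl.
move: (Gx i j k l ij' kl' Hx); move: u; rewrite /= !inE !negb_or.
by case/and4P => /and3P[_ /negbTE -> /negbTE ->].
Qed.

Lemma comp_braid3 : arr_complement (braid_arr R 3) = @Gs R 3.
Proof.
apply/seteqP; split => x.
  move=> hx; apply: gen2_of.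
    move=> u v uv; apply/eqP => e; apply: hx.
    exists (hyp_eq u v); last exact: e.
    by exists u, v.
  move=> i j k l u ij ik kl; exfalso; move: u.
  have := ltn_ord l; rewrite /= !inE !negb_or -!val_eqE /=.
  move: ij ik kl => ij ik kl hl.
  case/and4P => /and3P[_ _ _] /andP[/eqP h4 /eqP h5] _ _; have := ltn_ord j; lia.
move=> Gx [H [i [j [ij E]]] Hx]; subst H.
by have := gen2_neq (isT : (3 <= 3)%N) Gx (a := i) (b := j); rewrite neq_ltn ij Hx eqxx => /(_ isT).
Qed.

End Compl2.
Section Count.
Variables (R : realType) (m : nat).
Local Open Scope ring_scope.
Implicit Types (x : 'rV[R]_m).

Definition cl (P : {set 'S_m}) : {set {set 'S_m}} := [set Q in RPs R m | rp_equiv P Q].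

Lemma rIE_E : r_IE R m = #|[set cl P | P in RPs R m]|.
Proof. by []. Qed.

Lemma RPsP (P : {set 'S_m}) : P \in RPs R m <-> exists x : 'rV[R]_m, gen2 x /\ P = RP x.
Proof.
rewrite inE; split => [/asboolP [x [G E]]|[x [G E]]].
  by exists x; split => //; apply/generic_gen2.
by apply/asboolP; exists x; split => //; apply/generic_gen2.
Qed.

Arguments RPsP {P}.

Lemma Iset_sub (P : {set 'S_m}) : P \in Iset R m -> P \in RPs R m.
Proof. by move/IsetP => [x [G _ E]]; apply/RPsP; exists x. Qed.

Lemma RPs_Iset (P : {set 'S_m}) : (3 <= m)%N -> P \in RPs R m ->
  exists2 Q, Q \in Iset R m & rp_equiv P Q.
Proof.
move=> m3 /RPsP [z [Gz ->]].
have [p [Gp Ip]] := sort_gen m3 Gz.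
exists (RP (rowp z p)); first exact: Iset_RP.
by apply/rp_equivP; exists p; apply: RP_rowp.
Qed.

Lemma cl_eq (P Q : {set 'S_m}) : rp_equiv P Q -> cl P = cl Q.
Proof.
move=> PQ; apply/setP => S; rewrite !inE; apply/andP/andP => [[h1 h]|[h1 h]]; split => //.
  exact: rp_equiv_trans (rp_equiv_sym PQ) h.
exact: rp_equiv_trans PQ h.
Qed.

Lemma img_eq : (3 <= m)%N ->
  [set cl P | P in RPs R m] = [set cl P | P in Iset R m].
Proof.
move=> m3; apply/setP => C; apply/imsetP/imsetP => [[P PR ->]|[P PI ->]].
  have [Q QI PQ] := RPs_Iset m3 PR.
  by exists Q => //; apply: cl_eq.
by exists P => //; apply: Iset_sub.
Qed.

Lemma BtwP_relabel (s : 'S_m) (P : {set 'S_m}) a b c :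
  BtwP (relabel s P) a b c -> BtwP P ((s^-1)%g a) ((s^-1)%g b) ((s^-1)%g c).
Proof.
move=> H t tP.
have := H (t * s)%g (imset_f (fun u => (u * s)%g) tP).
by rewrite invMg !permM.
Qed.

Lemma sigma_cases x x' (s : 'S_m) : (2 <= m)%N -> incr x -> incr x' ->
  RP x' = relabel s (RP x) -> s = 1%g \/ s = revp m.
Proof.
move=> m2 I I' E.
have key : forall a b c : 'I_m, btw a b c ->
    btw ((s^-1)%g a) ((s^-1)%g b) ((s^-1)%g c).
  move=> a b c hb.
  have hab : a != b by move: hb; rewrite /btw -val_eqE /=; lia.
  have hbc : b != c by move: hb; rewrite /btw -val_eqE /=; lia.
  apply: (btw_RP2 I); rewrite ?(inj_eq perm_inj) //.
  apply: BtwP_relabel; rewrite -E.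
  exact: btw_RP1.
have [h|h] := btw_perm m2 key.
  by left; rewrite -[s]invgK h invg1.
by right; rewrite -[s]invgK h revpV.
Qed.

Lemma RP_rev_neq x : (4 <= m)%N -> incr x -> gen2 x -> RP x != RP (rowr x).
Proof.
move=> m4 I G; apply/eqP => E.
have m3 : (3 <= m)%N by apply: ltnW.
have S := RP_sv m3 I G (incr_rowr I) (gen2_rowr G) E.
have h0 : (0 < m)%N by apply: leq_trans m4.
have h1 : (1 < m)%N by apply: leq_trans m4.
have h2 : (m.-2 < m)%N by move: m4; lia.
have h3 : (m.-1 < m)%N by move: m4; lia.
set i0 : 'I_m := Ordinal h0; set i1 : 'I_m := Ordinal h1.
set i2 : 'I_m := Ordinal h2; set i3 : 'I_m := Ordinal h3.
have r0 : rev_ord i0 = i3 by apply: val_inj => /=; move: m4; lia.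
have r3 : rev_ord i3 = i0 by apply: val_inj => /=; move: m4; lia.
have r1 : rev_ord i1 = i2 by apply: val_inj => /=; move: m4; lia.
have r2 : rev_ord i2 = i1 by apply: val_inj => /=; move: m4; lia.
have n03 : i0 != i3 by rewrite -val_eqE /=; move: m4; lia.
have n12 : i1 != i2 by rewrite -val_eqE /=; move: m4; lia.
have nm : ~~ pmatch i0 i3 i1 i2 by rewrite /pmatch -!val_eqE /=; move: m4; lia.
have := S i0 i3 i1 i2 n03 n12.
rewrite /Sx !rowrE r0 r3 r1 r2 -!opprD ltrN2.
have := gen2_pmatch G n03 n12 nm; rewrite /Sx.
rewrite [x ord0 i3 + _]addrC [x ord0 i2 + _]addrC.
by case: ltgtP.
Qed.

Lemma fiber x : (4 <= m)%N -> incr x -> gen2 x ->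
  [set P in Iset R m | cl P == cl (RP x)] = [set RP x; RP (rowr x)].
Proof.
move=> m4 I G.
have m3 : (3 <= m)%N by apply: ltnW.
have m2 : (2 <= m)%N by apply: ltnW.
have ex : rp_equiv (RP (rowr x)) (RP x) by apply/rp_equivP; exists (revp m); apply: RP_rowr.
apply/setP => P; apply/idP/idP.
  move=> /setIdP[/IsetP [x' [G' I' ->]] /eqP e].
  have : RP x \in cl (RP x').
    by rewrite e; apply/setIdP; split; [apply/RPsP; exists x|apply: rp_equiv_refl].
  move=> /setIdP[_ /rp_equivP [s Es]].
  have [hs|hs] := sigma_cases m2 I I' Es.
    by rewrite Es hs relabel1; apply/set2P; left.
  by rewrite Es hs -RP_rowr; apply/set2P; right.
move=> /set2P[->|->]; apply/setIdP; split.
- exact: Iset_RP.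
- by [].
- exact: Iset_RP (gen2_rowr G) (incr_rowr I).
- by rewrite (cl_eq ex).
Qed.

Lemma count_main : (4 <= m)%N -> (2 * r_IE R m = r_0 R m)%N.
Proof.
move=> m4; have m3 : (3 <= m)%N by apply: ltnW.
rewrite rIE_E img_eq // r0E -[#|Iset R m|]sum1_card (partition_big_imset cl).
rewrite (eq_bigr (fun _ => 2%N)); first by rewrite sum_nat_const mulnC.
move=> C /imsetP [P0 /IsetP [x [G I ->]] ->].
rewrite sum1dep_card (fiber m4 I G) cards2.
by rewrite RP_rev_neq.
Qed.

End Count.
Section Three.
Variable R : realType.
Local Open Scope ring_scope.

Definition x0 : 'rV[R]_3 := \row_(i < 3) ((nat_of_ord i)%:R : R).

Lemma x0E i : x0 ord0 i = (nat_of_ord i)%:R.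
Proof. by rewrite mxE. Qed.

Lemma incr_x0 : incr x0.
Proof. by move=> i j ij; rewrite !x0E ltr_nat. Qed.

Lemma gen2_x0 : gen2 x0.
Proof.
move=> a b c d ab cd; rewrite /Sx !x0E -!natrD => /eqP; rewrite eqr_nat => /eqP e.
move: ab cd; rewrite /pmatch -!val_eqE /=.
have := ltn_ord a; have := ltn_ord b; have := ltn_ord c; have := ltn_ord d.
move: e; lia.
Qed.

Lemma sum3 (x : 'rV[R]_3) (p q r t : 'I_3) : incr x -> (p < q)%N -> (r < t)%N ->
  (Sx x p q < Sx x r t) = (p + q < r + t)%N.
Proof.
move=> I pq rt.
have : [|| p == r, q == t, q == r | p == t].
  move: pq rt; rewrite -!val_eqE /=.
  have := ltn_ord q; have := ltn_ord t; lia.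
rewrite /Sx; case/or4P => /eqP e; subst.
- by rewrite ltrD2l incr_lt // ltn_add2l.
- by rewrite ltrD2r incr_lt // ltn_add2r.
- rewrite [x ord0 p + _]addrC ltrD2l incr_lt //.
  by apply/idP/idP; lia.
- rewrite [x ord0 r + _]addrC ltrD2l incr_lt //.
  by apply/idP/idP; lia.
Qed.

Lemma sv3 (x x' : 'rV[R]_3) : incr x -> incr x' -> sv x x'.
Proof.
move=> I I' a b c d ab cd.
have [p [q [pq mab]]] := sortpair ab.
have [r [t [rt mcd]]] := sortpair cd.
by rewrite !(pmatchS _ mab) !(pmatchS _ mcd) !sum3.
Qed.

Lemma Iset3 : Iset R 3 = [set RP x0].
Proof.
apply/setP => P; apply/idP/idP.
  move=> /IsetP [x [G I ->]]; apply/set1P.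
  by apply: RP_eq_of_sv => //; [exact: gen2_x0|exact: sv3 incr_x0].
by move=> /set1P ->; apply: Iset_RP; [exact: gen2_x0|exact: incr_x0].
Qed.

Lemma r0_3 : r_0 R 3 = 1%N.
Proof. by rewrite r0E Iset3 cards1. Qed.

Lemma rIE_3 : r_IE R 3 = 1%N.
Proof. by rewrite rIE_E img_eq // Iset3 imset_set1 cards1. Qed.

End Three.

Unset Implicit Arguments. Set Strict Implicit.
Local Open Scope classical_set_scope.
Local Open Scope card_scope.

Theorem theorem3p3 (R : realType) :
  (r_IE R 3 = r_0 R 3 /\ r_0 R 3 = 1%N /\ chambers (braid_arr R 3) #= `I_(3`! * 1)) /\
  (forall m : nat, (4 <= m)%N ->
     (2 * r_IE R m = r_0 R m)%N /\ chambers (mid_arr R m) #= `I_(r_0 R m * m`!)).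
Proof.
split.
  split; first by rewrite rIE_3 r0_3.
  split; first exact: r0_3.
  have := @chambers_count R 3 (braid_arr R 3) (isT : (3 <= 3)%N) (comp_braid3 R).
  by rewrite r0_3 mul1n muln1.
move=> m m4; split; first exact: count_main.
apply: chambers_count; first exact: ltnW.
by apply: comp_mid; exact: ltnW.
Qed.
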